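(* Let $E$ be a graph with finitely many vertices and $K$ a field of characteristic $0$. Assume $E$ contains an edge $f$ which is the initial edge of an infinite path $q=fp$ (with $p$ an infinite path) such that $s(f)\ne r(f)=s(p)$. Then $\langle 1+2f^*,\ 1+2f\rangle$ is a non-cyclic free subgroup of $L_K(E)^\times$.
   Context: A graph $E=(E^0,E^1,r,s)$; $L_K(E)$ is the free associative $K$-algebra on $E^0\cup E^1\cup\{e^*\}$ subject to $vv'=\delta_{v,v'}v$, $s(e)e=er(e)=e$, $r(e)e^*=e^*s(e)=e^*$, $e^*f=\delta_{e,f}r(e)$, and $v=\sum_{s(e)=v}ee^*$ for every vertex $v$ emitting a finite nonzero number of edges; with $E^0$ finite it is unital with $1=\sum_v v$. An infinite path is $e_1e_2\cdots$ with $r(e_i)=s(e_{i+1})$, and its source is $s(e_1)$. *)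

(* Defs.v *)
From HB Require Import structures.
From mathcomp Require Import all_boot all_order all_algebra.
Set Implicit Arguments. Unset Strict Implicit. Unset Printing Implicit Defensive.
Import GRing.Theory.
Local Open Scope ring_scope.

Section Leavitt.
Variables (K : fieldType) (V : finType) (Ed : eqType) (s r : Ed -> V).

(* (P, X, Y) is a Leavitt E-family in the unital K-algebra B:
   P v ~ v, X e ~ e, Y e ~ e^*.  Since E^0 is finite, L_K(E) is unital with
   1 = sum_v v; we include this identity among the relations. *)
Definition leavitt_family (B : algType K) (P : V -> B) (X Y : Ed -> B) : Prop :=
  (forall v w, P v * P w = if v == w then P v else 0) /\
  [/\ (forall e, P (s e) * X e = X e /\ X e * P (r e) = X e),
      (forall e, P (r e) * Y e = Y e /\ Y e * P (s e) = Y e),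
      (forall e e', Y e * X e' = if e == e' then P (r e) else 0),
      (forall v (l : seq Ed), uniq l -> l != [::] ->
          (forall e, (s e == v) = (e \in l)) ->
          P v = \sum_(e <- l) X e * Y e)
    & 1 = \sum_(v : V) P v ].

Definition alg_hom (A B : algType K) (phi : A -> B) : Prop :=
  [/\ (forall x y, phi (x + y) = phi x + phi y),
      (forall (k : K) x, phi (k *: x) = k *: phi x),
      (forall x y, phi (x * y) = phi x * phi y)
    & phi 1 = 1].

(* A, with the family (P, X, Y), is (a copy of) the Leavitt path algebra
   L_K(E): the family is a Leavitt E-family and it is universal, i.e. every
   Leavitt E-family in any K-algebra B is the image of (P, X, Y) under a
   unique K-algebra homomorphism A -> B. *)
Definition is_leavitt_path_algebra (A : algType K) (P : V -> A) (X Y : Ed -> A)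
  : Prop :=
  leavitt_family P X Y /\
  forall (B : algType K) (P' : V -> B) (X' Y' : Ed -> B),
    leavitt_family P' X' Y' ->
    (exists phi : A -> B, alg_hom phi /\
       (forall v, phi (P v) = P' v) /\
       (forall e, phi (X e) = X' e) /\ (forall e, phi (Y e) = Y' e)) /\
    (forall phi psi : A -> B, alg_hom phi -> alg_hom psi ->
       (forall v, phi (P v) = P' v) -> (forall e, phi (X e) = X' e) ->
       (forall e, phi (Y e) = Y' e) ->
       (forall v, psi (P v) = P' v) -> (forall e, psi (X e) = X' e) ->
       (forall e, psi (Y e) = Y' e) ->
       forall x, phi x = psi x).

End Leavitt.

Definition infinite_path (V : Type) (Ed : Type) (s r : Ed -> V) (p : nat -> Ed)
  : Prop := forall i, r (p i) = s (p i.+1).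

(* Words in the letters a, a^{-1}, b, b^{-1}: a letter is (g, i) with
   g = false for a, true for b, and i = true for the inverse. *)
Definition reduced_word (w : seq (bool * bool)) : Prop :=
  forall k, (k.+1 < size w)%N ->
    ~ ((nth (false, false) w k).1 = (nth (false, false) w k.+1).1 /\
       (nth (false, false) w k).2 = ~~ (nth (false, false) w k.+1).2).

Definition eval_letter (R : nzRingType) (a ai b bi : R) (x : bool * bool) : R :=
  if x.1 then (if x.2 then bi else b) else (if x.2 then ai else a).

(* a and b are units of R that freely generate a free subgroup of R^x
   (of rank 2, in particular non-cyclic): no nonempty reduced word in
   a^{+-1}, b^{+-1} evaluates to 1. *)
Definition free_pair_of_units (R : nzRingType) (a b : R) : Prop :=
  exists ai bi : R,
    [/\ a * ai = 1, ai * a = 1, b * bi = 1, bi * b = 1 &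
      forall w : seq (bool * bool), w != [::] -> reduced_word w ->
        \prod_(x <- w) eval_letter a ai b bi x != 1].

(* Main.v *)
Require Import Defs.
From HB Require Import structures.
From mathcomp Require Import all_boot all_order all_algebra.
From mathcomp Require Import zify.
From mathcomp Require Import boolp.
Set Implicit Arguments. Unset Strict Implicit. Unset Printing Implicit Defensive.
Import GRing.Theory Num.Theory Order.TTheory.
Local Open Scope ring_scope.

Definition act1 (R : nzRingType) (l : bool * bool) (v : R * R) : R * R :=
  if l.1 then (if l.2 then (v.1 - 2%:R * v.2, v.2) else (v.1 + 2%:R * v.2, v.2))
  else (if l.2 then (v.1, v.2 - 2%:R * v.1) else (v.1, v.2 + 2%:R * v.1)).

Definition actw (R : nzRingType) (w : seq (bool * bool)) (v : R * R) : R * R :=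
  foldr (@act1 R) v w.

Definition inU (l : bool * bool) (v : int * int) : bool :=
  let x := v.1 in let y := v.2 in
  if l.1 then
    (if l.2 then ((0 < y) && (y < - x)) || ((y < 0) && (- y < x))
     else ((0 < y) && (y < x)) || ((x < y) && (y < 0)))
  else
    (if l.2 then ((0 < x) && (x < - y)) || ((x < 0) && (- x < y))
     else ((0 < x) && (x < y)) || ((y < x) && (x < 0))).

Lemma two_int : (2%:R : int) = 2. Proof. by []. Qed.

Lemma pp_step (l m : bool * bool) (v : int * int) :
  ~ (m.1 = l.1 /\ m.2 = ~~ l.2) -> inU m v -> inU l (act1 l v).
Proof.
case: l => [[] []]; case: m => [[] []]; case: v => x y /=; rewrite /inU /act1 /=;
  move=> H; try (exfalso; apply: H; done); move=> /orP H'; apply/orP; lia.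
Qed.

Definition v0 (l : bool * bool) : int * int := (1, if l.2 then -1 else 1).

Lemma pp_start l : inU l (act1 l (v0 l)).
Proof. by case: l => [[] []]. Qed.

Lemma v0_notin l m : ~~ inU m (v0 l).
Proof. by case: l => [[] []]; case: m => [[] []]. Qed.

Lemma reduced_tail l w : reduced_word (l :: w) -> reduced_word w.
Proof. by move=> H k Hk; apply: (H k.+1). Qed.

Lemma pp_main l w : reduced_word (l :: w) -> inU l (actw (l :: w) (v0 (last l w))).
Proof.
elim: w l => [|m w IH] l Hred /=; first exact: pp_start.
have Hm := IH m (reduced_tail Hred).
apply: (pp_step (m := m)) => //.
move=> [H1 H2]; apply: (Hred 0%N) => //=; split; first by rewrite H1.
by rewrite H2 negbK.
Qed.

Lemma pingpong w : w != [::] -> reduced_word w ->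
  exists v : int * int, actw w v != v.
Proof.
case: w => [//|l w] _ Hred; exists (v0 (last l w)).
apply/eqP => E; have := pp_main Hred; rewrite E.
by rewrite (negbTE (v0_notin _ _)).
Qed.

Lemma actw_intr (K : nzRingType) w (v : int * int) :
  actw w ((v.1)%:~R, (v.2)%:~R) = ((actw w v).1%:~R, (actw w v).2%:~R) :> K * K.
Proof.
elim: w => [|l w IH] //=; rewrite IH /act1.
case: l => [[] []] /=; by rewrite ?rmorphB ?rmorphD ?rmorphM ?rmorph_nat.
Qed.

Lemma intr_inj_pchar0 (K : fieldType) : [pchar K] =i pred0 ->
  forall x y : int, (x%:~R : K) = y%:~R -> x = y.
Proof.
move=> /pcharf0P H x y E; apply/eqP; rewrite -subr_eq0; apply/eqP.
have : ((x - y)%:~R : K) = 0 by rewrite intrB E subrr.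
case: (x - y) => n /=.
  by move/eqP; rewrite H => /eqP ->.
by rewrite NegzE mulrNz => /eqP; rewrite oppr_eq0 H.
Qed.

Section Op.
Variables (K : fieldType) (V : finType) (Ed : eqType) (s r : Ed -> V).
Variable (t0 : nat -> Ed).
Hypothesis Ht0 : infinite_path s r t0.
Variable f : Ed.
Hypothesis Hrf : r f = s (t0 0%N).
Hypothesis Hsr : s f != r f.

Definition pb (x : nat -> Ed) : bool := `[< infinite_path s r x >].
Definition T := {x : nat -> Ed | pb x}.
Definition F := T -> K.

Record B := MkB {
  op : F -> F;
  opD : forall u w, op (fun t => u t + w t) = (fun t => op u t + op w t);
  opZ : forall k u, op (fun t => k * u t) = (fun t => k * op u t) }.

Lemma eqB (a b : B) : (forall u t, op a u t = op b u t) -> a = b.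
Proof.
case: a b => [f1 fD fZ] [g gD gZ] /= H.
have E : f1 = g by apply: funext => u; apply: funext => t; exact: H.
subst g; congr MkB; exact: Prop_irrelevance.
Qed.

Lemma op0 (a : B) : op a (fun _ => 0) = fun _ => 0.
Proof.
have := opZ a 0 (fun _ => 0); rewrite /=.
have -> : (fun t : T => 0 * (0 : K)) = (fun _ => 0) by apply: funext => t; rewrite mul0r.
move=> ->; apply: funext => t; by rewrite mul0r.
Qed.

Program Definition zeroB : B := @MkB (fun u t => 0) _ _.
Next Obligation. by apply: funext => t; rewrite addr0. Qed.
Next Obligation. by apply: funext => t; rewrite mulr0. Qed.

Program Definition addB (a b : B) : B := @MkB (fun u t => op a u t + op b u t) _ _.
Next Obligation. apply: funext => t; rewrite !opD; by rewrite addrACA. Qed.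
Next Obligation. apply: funext => t; rewrite !opZ; by rewrite mulrDr. Qed.

Program Definition oppB (a : B) : B := @MkB (fun u t => - op a u t) _ _.
Next Obligation. apply: funext => t; rewrite !opD; by rewrite opprD. Qed.
Next Obligation. apply: funext => t; rewrite !opZ; by rewrite mulrN. Qed.

Program Definition oneB : B := @MkB (fun u => u) _ _.

Program Definition mulB (a b : B) : B := @MkB (fun u => op a (op b u)) _ _.
Next Obligation. by rewrite !opD. Qed.
Next Obligation. by rewrite !opZ. Qed.

Program Definition scaleB (k : K) (a : B) : B := @MkB (fun u t => k * op a u t) _ _.
Next Obligation. apply: funext => t; rewrite !opD; by rewrite mulrDr. Qed.
Next Obligation. apply: funext => t; rewrite !opZ; by rewrite mulrCA. Qed.

HB.instance Definition _ := gen_eqMixin B.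
HB.instance Definition _ := gen_choiceMixin B.

Lemma addBA : associative addB.
Proof. by move=> a b c; apply: eqB => u t; rewrite ?opE /=; rewrite addrA. Qed.
Lemma addBC : commutative addB.
Proof. by move=> a b; apply: eqB => u t; rewrite ?opE /=; rewrite addrC. Qed.
Lemma add0B : left_id zeroB addB.
Proof. by move=> a; apply: eqB => u t; rewrite ?opE /=; rewrite add0r. Qed.
Lemma addNB : left_inverse zeroB oppB addB.
Proof. by move=> a; apply: eqB => u t; rewrite ?opE /=; rewrite addNr. Qed.

HB.instance Definition _ := GRing.isZmodule.Build B addBA addBC add0B addNB.

Lemma mulBA : associative mulB.
Proof. by move=> a b c; apply: eqB. Qed.
Lemma mul1B : left_id oneB mulB.
Proof. by move=> a; apply: eqB. Qed.
Lemma mulB1 : right_id oneB mulB.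
Proof. by move=> a; apply: eqB. Qed.
Lemma mulBDl : left_distributive mulB addB.
Proof. by move=> a b c; apply: eqB. Qed.
Lemma mulBDr : right_distributive mulB addB.
Proof. by move=> a b c; apply: eqB => u t; rewrite ?opE /=; rewrite opD. Qed.

Definition tt0 : T := exist _ t0 (asboolT Ht0).

Lemma oneB_neq0 : oneB != zeroB.
Proof.
apply/eqP => /(congr1 (fun a => op a (fun _ => 1) tt0)) /=.
by move/eqP; rewrite oner_eq0.
Qed.

HB.instance Definition _ := GRing.Zmodule_isNzRing.Build B mulBA mul1B mulB1 mulBDl mulBDr oneB_neq0.

Lemma scaleBA k l a : scaleB k (scaleB l a) = scaleB (k * l) a.
Proof. by apply: eqB => u t; rewrite ?opE /=; rewrite mulrA. Qed.
Lemma scale1B : left_id 1 scaleB.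
Proof. by move=> a; apply: eqB => u t; rewrite ?opE /=; rewrite mul1r. Qed.
Lemma scaleBDr : right_distributive scaleB +%R.
Proof. by move=> k a b; apply: eqB => u t; rewrite ?opE /=; rewrite mulrDr. Qed.
Lemma scaleBDl a : {morph scaleB^~ a : k l / k + l}.
Proof. by move=> k l; apply: eqB => u t; rewrite ?opE /=; rewrite mulrDl. Qed.

HB.instance Definition _ := GRing.Zmodule_isLmodule.Build K B scaleBA scale1B scaleBDr scaleBDl.

Lemma scaleBAl (k : K) (a b : B) : k *: (a * b) = (k *: a) * b.
Proof. by apply: eqB. Qed.
HB.instance Definition _ := GRing.Lmodule_isLalgebra.Build K B scaleBAl.
Lemma scaleBAr (k : K) (a b : B) : k *: (a * b) = a * (k *: b).
Proof. by apply: eqB => u t; rewrite ?opE /=; rewrite opZ. Qed.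
HB.instance Definition _ := GRing.Lalgebra_isAlgebra.Build K B scaleBAr.

Definition scons (e : Ed) (x : nat -> Ed) : nat -> Ed :=
  fun n => if n is n'.+1 then x n' else e.

Lemma pbP x : reflect (infinite_path s r x) (pb x).
Proof. exact: asboolP. Qed.

Lemma pb_tl_proof (t : T) : pb (fun n => val t n.+1).
Proof. apply/pbP => i; case: t => x /= /pbP; apply. Qed.

Definition tl (t : T) : T := exist (fun x => pb x) _ (pb_tl_proof t).

Lemma pb_scons (t : T) e : pb (scons e (val t)) = (r e == s (val t 0%N)).
Proof.
case: t => x /= /pbP Hx; apply/pbP/eqP => [H|H]; first exact: (H 0%N).
by case.
Qed.

Definition Yfun e (u : F) (t : T) : K :=
  if @insub _ (fun x => pb x) T (scons e (val t)) is Some t' then u t' else 0.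

Program Definition Pop (v : V) : B := @MkB (fun u t => if s (val t 0%N) == v then u t else 0) _ _.
Next Obligation. by apply: funext => t; case: ifP; rewrite ?addr0. Qed.
Next Obligation. by apply: funext => t; case: ifP; rewrite ?mulr0. Qed.

Program Definition Xop (e : Ed) : B := @MkB (fun u t => if val t 0%N == e then u (tl t) else 0) _ _.
Next Obligation. by apply: funext => t; case: ifP; rewrite ?addr0. Qed.
Next Obligation. by apply: funext => t; case: ifP; rewrite ?mulr0. Qed.

Program Definition Yop (e : Ed) : B := @MkB (Yfun e) _ _.
Next Obligation. by apply: funext => t; rewrite /Yfun; case: insub; rewrite ?addr0. Qed.
Next Obligation. by apply: funext => t; rewrite /Yfun; case: insub; rewrite ?mulr0. Qed.

Lemma opE (a b : B) u : op (a * b) u = op a (op b u). Proof. by []. Qed.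

Lemma op_sum (I : Type) (l : seq I) (Pr : pred I) (G : I -> B) u t :
  op (\sum_(i <- l | Pr i) G i) u t = \sum_(i <- l | Pr i) op (G i) u t.
Proof.
by apply: (big_morph (fun a : B => op a u t) (id1 := 0) (op1 := +%R)).
Qed.

Lemma Yfun_val e u (t : T) :
  Yfun e u t = if r e == s (val t 0%N) then u (insubd t (scons e (val t))) else 0.
Proof.
rewrite /Yfun /insubd; case: insubP => [t' Ht' Hv|Hn].
  by rewrite -pb_scons Ht' /=.
by rewrite -pb_scons (negbTE Hn).
Qed.

Lemma val_insubd_scons e (t : T) : r e = s (val t 0%N) ->
  val (insubd t (scons e (val t))) = scons e (val t).
Proof. by move=> H; rewrite val_insubd pb_scons H eqxx. Qed.

Lemma XY_val e u t : op (Xop e * Yop e) u t = if sval t 0%N == e then u t else 0.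
Proof.
rewrite opE /=; case: (sval t 0%N =P e) => // He.
have Hs : r e = s (sval t 1%N) by case: t He => x /= /pbP Hx <-; rewrite (Hx 0%N).
rewrite Yfun_val /= Hs eqxx; congr u; apply: val_inj.
rewrite val_insubd_scons //=; apply: funext => -[|n] //=.
Qed.

Lemma leavittB : leavitt_family s r Pop Xop Yop.
Proof.
split.
  move=> v w; case: (v =P w) => [<-|nvw]; apply: eqB => u t; rewrite ?opE /=.
    by case: eqP.
  case: eqP => [Hv|//]; case: eqP => [Hw|//].
  by case: nvw; rewrite -Hv -Hw.
split.
- move=> e; split; apply: eqB => u t; rewrite ?opE /=.
    by case: (sval t 0%N =P e) => [->|]; rewrite ?eqxx //; case: eqP.
  case: (sval t 0%N =P e) => // He.
  have Hs : s (sval t 1%N) = r e by case: t He => x /= /pbP Hx <-; rewrite (Hx 0%N).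
  by rewrite /= Hs eqxx.
- move=> e; split; apply: eqB => u t; rewrite ?opE /=.
    rewrite Yfun_val; case: eqP => [->|]; first by rewrite eqxx.
    by move=> H; case: eqP => // H'; case: H; rewrite H'.
  rewrite !Yfun_val; case: eqP => // Hr.
  by rewrite val_insubd_scons // eqxx.
- move=> e e'; case: (e =P e') => [<-|ne]; apply: eqB => u t; rewrite ?opE /=.
    rewrite Yfun_val; case: eqP => Hr.
      rewrite val_insubd_scons //= eqxx -Hr eqxx; congr u; apply: val_inj => /=.
      by rewrite val_insubd_scons.
    by case: eqP => // Hs; case: Hr; rewrite Hs.
  rewrite Yfun_val; case: eqP => Hr //.
  by rewrite val_insubd_scons //=; case: eqP.
- move=> v l ul ln0 Hl; apply: eqB => u t; rewrite ?opE /=; rewrite op_sum.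
  under eq_bigr do rewrite XY_val.
  rewrite Hl; case: ifP => Hin.
    rewrite (bigD1_seq (sval t 0%N)) //= eqxx big1_seq ?addr0 // => e /andP[ne _].
    by rewrite eq_sym (negbTE ne).
  rewrite big1_seq // => e /andP[_ ein].
  by case: eqP => // He; rewrite He ein in Hin.
- apply: eqB => u t; rewrite ?opE /=; rewrite op_sum /=.
  rewrite (bigD1 (s (val t 0%N))) //= eqxx big1 ?addr0 //.
  by move=> w /negbTE; rewrite eq_sym => ->.
Qed.

Definition tp : T := tt0.
Definition tq : T := insubd tt0 (scons f t0).

Lemma val_tq : val tq = scons f t0.
Proof. by rewrite /tq val_insubd /= (@pb_scons tt0 f) /= Hrf eqxx. Qed.

Lemma tl_tq : tl tq = tp.
Proof. apply: val_inj => /=; rewrite /tp /tt0 /=; apply: funext => n; by rewrite val_tq. Qed.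

Lemma sq0 : sval tq 0%N = f.
Proof. exact: (congr1 (fun x => x 0%N) val_tq). Qed.

Lemma sq0' : val tq 0%N = f.
Proof. exact: (congr1 (fun x => x 0%N) val_tq). Qed.

Lemma sp0 : sval tp 0%N != f.
Proof. apply/eqP => E; move: Hsr; by rewrite Hrf -E eqxx. Qed.

Lemma XB_q u : op (Xop f) u tq = u tp.
Proof. by rewrite /= sq0 eqxx tl_tq. Qed.
Lemma XB_p u : op (Xop f) u tp = 0.
Proof. by rewrite /= (negbTE sp0). Qed.
Lemma YB_q u : op (Yop f) u tq = 0.
Proof. by rewrite /= Yfun_val sq0' eq_sym (negbTE Hsr). Qed.
Lemma YB_p u : op (Yop f) u tp = u tq.
Proof.
by rewrite /= Yfun_val /tp /tt0 /= -Hrf eqxx.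
Qed.

Lemma op1 u : op 1 u = u. Proof. by []. Qed.
Lemma opDE (a b : B) u t : op (a + b) u t = op a u t + op b u t. Proof. by []. Qed.
Lemma opNE (a : B) u t : op (- a) u t = - op a u t. Proof. by []. Qed.
Lemma opME (a b : B) u t : op (a * b) u t = op a (op b u) t. Proof. by []. Qed.
Lemma op1E u t : op 1 u t = u t. Proof. by []. Qed.
Lemma opn n u t : op (n%:R) u t = n%:R * u t.
Proof.
elim: n => [|n IH]; first by rewrite /= mul0r.
by rewrite -addn1 !natrD /= IH mulrDl mul1r.
Qed.

Definition LB (l : bool * bool) : B :=
  eval_letter (1 + 2%:R * Yop f) (1 - 2%:R * Yop f) (1 + 2%:R * Xop f) (1 - 2%:R * Xop f) l.

Lemma letterB l u : (op (LB l) u tq, op (LB l) u tp) = act1 l (u tq, u tp).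
Proof.
case: l => [[] []]; rewrite /LB /eval_letter /act1 !opDE ?opNE; rewrite ?opME ?opn ?op1E ?XB_q ?XB_p ?YB_q ?YB_p ?mulr0 ?subr0 ?addr0 //=; rewrite ?mulr_natl ?mulr2n ?opprD ?addrA ?subr0 ?addr0 ?oppr0 //.
Qed.

Lemma wordB w u : (op (\prod_(x <- w) LB x) u tq, op (\prod_(x <- w) LB x) u tp)
   = actw w (u tq, u tp).
Proof.
elim: w u => [|l w IH] u; first by rewrite big_nil.
by rewrite big_cons /= -IH -letterB.
Qed.

Lemma main_sec (A : algType K) (P : V -> A) (X Y : Ed -> A) :
  [pchar K] =i pred0 -> is_leavitt_path_algebra s r P X Y ->
  free_pair_of_units (1 + 2%:R * Y f) (1 + 2%:R * X f).
Proof.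
move=> Hch [[HPP [HX HY HYX _ _]] Hu].
have [[phi [[phiD phiZ phiM phi1] [phiP [phiX phiY]]]] _] := Hu _ _ _ _ leavittB.
have YY : Y f * Y f = 0.
  have [E1 E2] := HY f.
  have -> : Y f * Y f = (Y f * P (s f)) * (P (r f) * Y f) by rewrite E1 E2.
  by rewrite mulrA -(mulrA (Y f)) HPP (negbTE Hsr) mulr0 mul0r.
have XX : X f * X f = 0.
  have [E1 E2] := HX f.
  have -> : X f * X f = (X f * P (r f)) * (P (s f) * X f) by rewrite E1 E2.
  by rewrite mulrA -(mulrA (X f)) HPP eq_sym (negbTE Hsr) mulr0 mul0r.
have inv (z : A) : z * z = 0 -> (1 + 2%:R * z) * (1 - 2%:R * z) = 1 /\
                         (1 - 2%:R * z) * (1 + 2%:R * z) = 1.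
  move=> zz; have z2 : (2%:R * z) * (2%:R * z) = 0.
    by rewrite !mulr_natl mulrnAl mulrnAr zz !mul0rn.
  split.
    by rewrite mulrDl mul1r mulrBr mulr1 z2 subr0 subrK.
  by rewrite mulrBl mul1r mulrDr mulr1 z2 addr0 addrK.
have [a1 a2] := inv _ YY; have [b1 b2] := inv _ XX.
exists (1 - 2%:R * Y f), (1 - 2%:R * X f); split => // w wn0 wred.
apply/eqP => Hw.
have phi0 : phi 0 = 0.
  by have := phiZ 0 0; rewrite !scale0r.
have phiN x : phi (- x) = - phi x.
  by apply/eqP; rewrite -addr_eq0 -phiD addNr phi0.
have phin n : phi n%:R = n%:R.
  elim: n => [|n IH]; first exact: phi0.
  by rewrite -addn1 !natrD phiD IH phi1.
have phiL l : phi (eval_letter (1 + 2%:R * Y f) (1 - 2%:R * Y f) (1 + 2%:R * X f) (1 - 2%:R * X f) l) = LB l.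
  case: l => [[] []]; rewrite /LB /eval_letter /=;
  by rewrite ?phiD ?phiN phiM phin ?phiX ?phiY phi1.
have HB1 : \prod_(x <- w) LB x = 1.
  have E : phi (\prod_(x <- w) eval_letter (1 + 2%:R * Y f) (1 - 2%:R * Y f) (1 + 2%:R * X f) (1 - 2%:R * X f) x) = \prod_(x <- w) LB x.
    rewrite (big_morph phi phiM phi1).
    by apply: eq_bigr => l _; rewrite phiL.
  by rewrite -E Hw phi1.
have [v Hv] := pingpong wn0 wred.
pose u : F := fun t => if s (sval t 0%N) == s f then (v.1)%:~R else (v.2)%:~R.
have := wordB w u; rewrite HB1 /u /= sq0 eqxx /tp /tt0 /= -Hrf eq_sym (negbTE Hsr).
have -> : ((v.1)%:~R, (v.2)%:~R) = ((v.1)%:~R, (v.2)%:~R) :> K * K by [].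
rewrite actw_intr => -[E1 E2].
move: Hv; case: (actw w v) E1 E2 => a b /= E1 E2.
rewrite -(intr_inj_pchar0 Hch E1) -(intr_inj_pchar0 Hch E2).
by case: v {u E1 E2} => ? ? /=; rewrite eqxx.
Qed.
End Op.

Theorem lemma4p7 (K : fieldType) (V : finType) (Ed : eqType) (s r : Ed -> V)
    (A : algType K) (P : V -> A) (X Y : Ed -> A) (f : Ed) :
  [pchar K] =i pred0 ->
  is_leavitt_path_algebra s r P X Y ->
  (exists p : nat -> Ed, infinite_path s r p /\ r f = s (p 0%N)) ->
  s f != r f ->
  free_pair_of_units (1 + 2%:R * Y f) (1 + 2%:R * X f).
Proof.
move=> Hch HL [p [Hp Hrf]] Hsr.
exact: (@main_sec K V Ed s r p Hp f Hrf Hsr A P X Y Hch HL).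
Qed.
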